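(* Assume $n_1\equiv\pm1\pmod 8$ and $n_2\equiv\pm1\pmod 8$. Then $-1\in D_1$ if and only if $n_2\equiv -1\pmod 8$.
   Context: Let $n_1,n_2$ be distinct odd primes, $n=n_1n_2$, $d=\gcd(n_1-1,n_2-1)$ and $e=(n_1-1)(n_2-1)/d$. Let $g_1,g_2$ be primitive roots modulo $n_1,n_2$ respectively, let $g$ be the integer modulo $n$ with $g\equiv g_1 \pmod{n_1}$, $g\equiv g_2\pmod{n_2}$, and let $\nu$ be the integer modulo $n$ with $\nu\equiv g\pmod{n_1}$, $\nu\equiv 1\pmod{n_2}$. It is known that every element of $\mathbb{Z}_n^*$ can be written uniquely as $g^s\nu^i$ with $0\le s\le e-1$, $0\le i\le d-1$. Define $D_1=\{g^{2s+1}\nu^i: 0\le s\le (e-2)/2,\ 0\le i\le d-1\}$. *)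

(* Defs.v *)
From mathcomp Require Import all_boot.
Set Implicit Arguments. Unset Strict Implicit. Unset Printing Implicit Defensive.

Definition prim_root_mod (p g : nat) : Prop :=
  g ^ (p.-1) = 1 %[mod p] /\ (forall k, 0 < k < p.-1 -> g ^ k <> 1 %[mod p]).

Definition inD1 (n1 n2 g nu x : nat) : Prop :=
  let n := n1 * n2 in
  let d := gcdn n1.-1 n2.-1 in
  let e := (n1.-1 * n2.-1) %/ d in
  exists s i, s <= (e - 2) %/ 2 /\ i <= d - 1 /\
    g ^ (2 * s + 1) * nu ^ i = x %[mod n].

(* Main.v *)
From mathcomp Require Import all_boot zify.
Require Import Defs.
Set Implicit Arguments. Unset Strict Implicit.

Lemma exp_red p g N a : g ^ N = 1 %[mod p] -> g ^ a = g ^ (a %% N) %[mod p].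
Proof.
move=> H; rewrite {1}(divn_eq a N) expnD [_ %/ N * N]mulnC expnM.
have E : (g ^ N) ^ (a %/ N) = 1 %[mod p] by rewrite -modnXm H modnXm exp1n.
by rewrite -modnMml E modnMml mul1n.
Qed.

Lemma exp_cong p g N a a' : g ^ N = 1 %[mod p] -> a = a' %[mod N] -> g ^ a = g ^ a' %[mod p].
Proof. by move=> H Ha; rewrite (exp_red _ H) Ha -(exp_red _ H). Qed.

Lemma prim_pos p g : 1 < p -> prim_root_mod p g -> 0 < g.
Proof.
move=> p1 [H _]; have p0 : 0 < p.-1 by case: p p1 H => // [[]].
case: g H => // H.
by move: H; rewrite exp0n // mod0n modn_small.
Qed.

Lemma prim_ndvd p g : 1 < p -> prim_root_mod p g -> ~~ (p %| g).
Proof.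
move=> p1 [H _]; have p0 : 0 < p.-1 by case: p p1 H => // [[]].
apply/negP => /dvdnP [k Hk]; subst g.
move: H; rewrite expnMn -(prednK p0) !expnS.
by rewrite mulnCA modnMr modn_small.
Qed.

Lemma prim_order_small p g a b : prime p -> prim_root_mod p g ->
  a < p.-1 -> b < p.-1 -> a <= b -> g ^ a = g ^ b %[mod p] -> a = b.
Proof.
move=> pp Hg ha hb ab E.
have p1 := prime_gt1 pp.
have gp := prim_pos p1 Hg.
have gnd := prim_ndvd p1 Hg.
case: (Hg) => HN Hk.
rewrite -(subnKC ab) expnD in E.
move: E; set c := b - a => E.
have gc : 0 < g ^ c by rewrite expn_gt0 gp.
move/eqP: E; rewrite eq_sym eqn_mod_dvd; last by rewrite leq_pmulr.
rewrite -{2}(muln1 (g ^ a)) -mulnBr Euclid_dvdM // Euclid_dvdX // (negbTE gnd) /=.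
rewrite -eqn_mod_dvd // => /eqP E.
case: (posnP c) => c0; first by rewrite -(subnKC ab) -/c c0 addn0.
have cb : c < p.-1 by apply: leq_ltn_trans (leq_subr _ _) hb.
by exfalso; apply: (Hk c); [rewrite c0 cb | rewrite E].
Qed.

Lemma prim_order p g a b : prime p -> prim_root_mod p g -> g ^ a = g ^ b %[mod p] ->
  a = b %[mod p.-1].
Proof.
move=> pp Hg Hab.
have p1 := prime_gt1 pp.
case: (Hg) => HN Hk.
have p0 : 0 < p.-1 by case: p p1 {pp Hg Hab HN Hk} => // [[]].
move: Hab; rewrite (exp_red _ HN) (exp_red b HN) => Hab.
have ha : a %% p.-1 < p.-1 by rewrite ltn_mod.
have hb : b %% p.-1 < p.-1 by rewrite ltn_mod.
case: (leqP (a %% p.-1) (b %% p.-1)) => h.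
  exact: (prim_order_small pp Hg ha hb h Hab).
by symmetry; apply: (prim_order_small pp Hg hb ha (ltnW h)).
Qed.

Lemma prim_half p g : prime p -> odd p -> prim_root_mod p g ->
  g ^ (p.-1./2) = p.-1 %[mod p].
Proof.
move=> pp op Hg.
have p1 := prime_gt1 pp.
have gp := prim_pos p1 Hg.
case: (Hg) => HN Hk.
have p3 : 2 < p by case: p p1 op {pp Hg HN Hk} => // [[|[]]].
have h2 : (p.-1./2).*2 = p.-1.
  rewrite even_halfK //. by move: op; case: (p) => //= n; rewrite negbK.
set x := g ^ (p.-1./2).
have x2 : x * x = 1 %[mod p] by rewrite -expnD addnn h2.
have xp : 0 < x by rewrite expn_gt0 gp.
have x1 : x != 1 %[mod p].
  apply/eqP; apply: Hk; apply/andP; split.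
    rewrite half_gt0; move: p3; case: (p) => // [[|[]]] //.
  rewrite -{2}h2 -addnn -{1}(addn0 (p.-1)./2) ltn_add2l half_gt0.
  move: p3; case: (p) => // [[|[]]] //.
have : p %| (x - 1) * (x + 1).
  rewrite mulnBl mul1n mulnDr muln1 subnDA addnK -eqn_mod_dvd ?x2 //.
  by rewrite muln_gt0 xp.
rewrite Euclid_dvdM // -eqn_mod_dvd // (negbTE x1) /= => H.
apply/eqP; rewrite -(eqn_modDr 1) !addn1 prednK; last exact: ltnW.
by rewrite modnn -addn1; exact: H.
Qed.

From mathcomp Require Import zify.

Lemma cong_pow p x y k : x = y %[mod p] -> x ^ k = y ^ k %[mod p].
Proof. by move=> H; rewrite -modnXm H modnXm. Qed.

Lemma cong_mul p x y x' y' : x = x' %[mod p] -> y = y' %[mod p] -> x * y = x' * y' %[mod p].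
Proof. by move=> H1 H2; rewrite -modnMm H1 H2 modnMm. Qed.

Lemma big_mod_l n1 n2 : 0 < n1 -> 0 < n2 -> n1 * n2 - 1 = n1.-1 %[mod n1].
Proof.
move=> h1 h2; have -> : n1 * n2 - 1 = n1 * n2.-1 + n1.-1.
  case: n2 h2 => // k _; case: n1 h1 => // j _; rewrite mulnS /=; lia.
by rewrite [n1 * _]mulnC modnMDl.
Qed.

Lemma big_mod_r n1 n2 : 0 < n1 -> 0 < n2 -> n1 * n2 - 1 = n2.-1 %[mod n2].
Proof. by move=> h1 h2; rewrite mulnC big_mod_l. Qed.

Lemma construct N1 N2 : 0 < N1 -> N2 %% 4 = 2 ->
  exists t i, [/\ t < lcmn N1 N2, odd t, i < gcdn N1 N2,
    t = N2./2 %[mod N2] & t + i = N1./2 %[mod N1]].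
Proof.
move=> h1 h2.
have N2p : 0 < N2 by lia.
set d := gcdn N1 N2; set e := lcmn N1 N2; set m := N2./2; set b := N1./2.
have dp : 0 < d by rewrite gcdn_gt0 h1.
have ep : 0 < e by rewrite lcmn_gt0 h1.
have [u v Huv _] := egcdnP N1 N2p.
have Hu : u * N2 = d %[mod N1] by rewrite Huv gcdnC modnMDl.
set C := b + N1 * m - m.
set i := C %% d; set q := C %/ d.
set t0 := m + u * N2 * q.
exists (t0 %% e), i; split.
- by rewrite ltn_mod.
- have d2 : 2 %| e by apply: dvdn_trans (dvdn_lcmr _ _); apply/dvdnP; exists m; lia.
  have Ho : odd t0.
    rewrite /t0 oddD !oddM.
    have -> : odd N2 = false by lia.
    have -> : odd m = true by lia.
    by rewrite andbF.
  by have := modn_dvdm t0 d2; rewrite !modn2 Ho; case: (odd _).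
- by rewrite ltn_mod.
- rewrite modn_dvdm ?dvdn_lcmr // /t0 [u * N2 * q]mulnAC addnC.
  by rewrite modnMDl.
- rewrite -modnDml modn_dvdm ?dvdn_lcml // modnDml /t0.
  have -> : m + u * N2 * q + i = (u * N2) * q + (m + i) by lia.
  rewrite -modnDml -modnMml Hu modnMml modnDml.
  have -> : d * q + (m + i) = b + N1 * m.
    have := divn_eq C d; rewrite -/q -/i => EC.
    have : m <= N1 * m by rewrite leq_pmull.
    rewrite /C in EC *; lia.
  by rewrite addnC mulnC modnMDl.
Qed.

Lemma parity_contra n s : n %% 8 = 1 -> 2 * s + 1 = n.-1./2 %[mod n.-1] -> False.
Proof.
move=> h E.
have d2 : 2 %| n.-1 by apply/dvdnP; exists (n.-1 %/ 2); lia.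
move: E => /(congr1 (modn^~ 2)) /=; rewrite !modn_dvdm //.
lia.
Qed.

Lemma m8_m4 n : n %% 8 = 7 -> n.-1 %% 4 = 2. Proof. lia. Qed.
Lemma half_le t e : t < e -> odd t -> t./2 <= (e - 2) %/ 2. Proof. lia. Qed.
Lemma lt_le1 i d : i < d -> i <= d - 1. Proof. lia. Qed.
Lemma odd_half t : odd t -> 2 * t./2 + 1 = t. Proof. lia. Qed.

Theorem mainTheorem10 (n1 n2 g1 g2 g nu : nat) :
  prime n1 -> prime n2 -> odd n1 -> odd n2 -> n1 != n2 ->
  prim_root_mod n1 g1 -> prim_root_mod n2 g2 ->
  g = g1 %[mod n1] -> g = g2 %[mod n2] ->
  nu = g %[mod n1] -> nu = 1 %[mod n2] ->
  (n1 %% 8 = 1 \/ n1 %% 8 = 7) -> (n2 %% 8 = 1 \/ n2 %% 8 = 7) ->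
  (inD1 n1 n2 g nu (n1 * n2 - 1) <-> n2 %% 8 = 7).
Proof.
move=> p1 p2 o1 o2 ne H1 H2 gg1 gg2 nug nu1 _ h2.
have n1g := prime_gt1 p1; have n2g := prime_gt1 p2.
have n10 : 0 < n1 by lia.
have n20 : 0 < n2 by lia.
have N10 : 0 < n1.-1 by rewrite -subn1 subn_gt0.
have cop : coprime n1 n2 by rewrite prime_coprime // dvdn_prime2.
have R2 : forall k i, g ^ k * nu ^ i = g2 ^ k %[mod n2].
  move=> k i; rewrite -(muln1 (g2 ^ k)); apply: cong_mul; first exact: cong_pow.
  by rewrite -(exp1n i); apply: cong_pow.
have R1 : forall k i, g ^ k * nu ^ i = g1 ^ (k + i) %[mod n1].
  move=> k i; rewrite expnD; apply: cong_mul; first exact: cong_pow.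
  by apply: cong_pow; rewrite nug.
have half2 := prim_half p2 o2 H2.
have half1 := prim_half p1 o1 H1.
split.
  case=> s [i [_ [_ E]]].
  case: h2 => // h2; exfalso.
  have E2 : g2 ^ (2 * s + 1) = g2 ^ (n2.-1./2) %[mod n2].
    rewrite -(R2 _ i) half2 -(big_mod_r n10 n20).
    apply/eqP; move/eqP: E; rewrite chinese_remainder // => /andP [_].
    done.
  exact: (parity_contra h2 (prim_order p2 H2 E2)).
move=> h7.
have [t [i [te ot id Et Eti]]] := construct N10 (m8_m4 h7).
exists (t./2), i; split; first exact: half_le te ot.
split; first exact: lt_le1.
rewrite odd_half //.
case: H1 => HN1 _; case: H2 => HN2 _.
apply/eqP; rewrite chinese_remainder //; apply/andP; split; apply/eqP.
  by rewrite R1 big_mod_l // -half1; apply: exp_cong HN1 Eti.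
by rewrite R2 big_mod_r // -half2; apply: exp_cong HN2 Et.
Qed.
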